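(* Assume (A3) below. For any $\omega$ in the interior of the simplex $\Delta^{L-1}$, the diagonal matrix $W=\mathrm{diag}(\omega_1/\gamma_1^2,\dots,\omega_L/\gamma_L^2)$ is positive definite and satisfies $\lambda(W)=\omega$. For any $\omega\in\Delta^{L-1}$ (including the boundary), there exists a positive definite $W$ with $\lambda(W)=\omega$.
   Context: $D_i\in\{0,1\}$ is a treatment and $\mathbf Z_i=(Z_{1i},\dots,Z_{Li})'\in\{0,1\}^L$, $L\ge2$, are binary instruments. $p_\ell=P(Z_{\ell i}=1)$, $\pi_\ell=\mathbb E[D_i\mid Z_{\ell i}=1]-\mathbb E[D_i\mid Z_{\ell i}=0]$, $\gamma_\ell=\mathrm{Cov}(D_i,Z_{\ell i})=\pi_\ell p_\ell(1-p_\ell)$, $\boldsymbol\gamma=(\gamma_1,\dots,\gamma_L)'$, $\Sigma_Z=\mathrm{Var}(\mathbf Z_i)$. For a positive definite $W$, $\lambda(W)=(\lambda_1(W),\dots,\lambda_L(W))$ with $\lambda_\ell(W)=\gamma_\ell[W\boldsymbol\gamma]_\ell/(\boldsymbol\gamma'W\boldsymbol\gamma)$. $\Delta^{L-1}=\{\omega\in\mathbb R^L:\omega_\ell\ge0,\ \sum_\ell\omega_\ell=1\}$. Assumption (A3): $p_\ell>0$ and $\pi_\ell>0$ for all $\ell$, and $\Sigma_Z$ is positive definite. *)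

(* Defs.v *)
(* The joint law of (D_i, Z_i) is a probability mass function on
   the finite outcome space {0,1} x {0,1}^L. *)
From HB Require Import structures.
From mathcomp Require Import all_boot all_order all_algebra.
Set Implicit Arguments. Unset Strict Implicit. Unset Printing Implicit Defensive.
Import Order.TTheory GRing.Theory Num.Theory.
Local Open Scope ring_scope.

Definition outcome (L : nat) := (bool * {ffun 'I_L -> bool})%type.

Section IV.
Variables (R : realFieldType) (L : nat).


Definition is_pmf (P : {ffun outcome L -> R}) : Prop :=
  (forall x, 0 <= P x) /\ \sum_x P x = 1.

Variable P : {ffun outcome L -> R}.

Definition Expect (f : outcome L -> R) : R := \sum_x P x * f x.
Definition Dv (x : outcome L) : R := (x.1 : nat)%:R.
Definition Zv (l : 'I_L) (x : outcome L) : R := (x.2 l : nat)%:R.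
Definition Cov (f g : outcome L -> R) : R :=
  Expect (fun x => f x * g x) - Expect f * Expect g.

Definition pZ (l : 'I_L) : R := Expect (Zv l).
Definition condED (l : 'I_L) (b : bool) : R :=
  Expect (fun x => Dv x * (x.2 l == b)%:R) / Expect (fun x => (x.2 l == b)%:R).
Definition piZ (l : 'I_L) : R := condED l true - condED l false.
Definition gam (l : 'I_L) : R := Cov Dv (Zv l).
Definition gamv : 'cV[R]_L := \col_l gam l.
Definition SigmaZ : 'M[R]_L := \matrix_(i, j) Cov (Zv i) (Zv j).

Definition lambdaW (W : 'M[R]_L) (l : 'I_L) : R :=
  gam l * (W *m gamv) l 0 / (gamv^T *m W *m gamv) 0 0.

End IV.

Definition posdef (R : realFieldType) (n : nat) (W : 'M[R]_n) : Prop :=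
  W^T = W /\ forall x : 'cV[R]_n, x != 0 -> 0 < (x^T *m W *m x) 0 0.

Definition A3 (R : realFieldType) (L : nat) (P : {ffun outcome L -> R}) : Prop :=
  (forall l, 0 < pZ P l) /\ (forall l, 0 < piZ P l) /\ posdef (SigmaZ P).

Definition in_simplex (R : realFieldType) (L : nat) (w : 'I_L -> R) : Prop :=
  (forall l, 0 <= w l) /\ \sum_l w l = 1.
Definition in_simplex_interior (R : realFieldType) (L : nat) (w : 'I_L -> R) : Prop :=
  (forall l, 0 < w l) /\ \sum_l w l = 1.

(* Main.v *)
Require Import Defs.
From HB Require Import structures.
From mathcomp Require Import all_boot all_order all_algebra.
From mathcomp Require Import ring lra.
Set Implicit Arguments. Unset Strict Implicit.
Import Order.TTheory GRing.Theory Num.Theory.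
Local Open Scope ring_scope.

Lemma Expect_ext (R : realFieldType) (L : nat) (P : {ffun outcome L -> R}) f g :
  (forall x, f x = g x) -> Expect P f = Expect P g.
Proof. by move=> h; apply: eq_bigr => x _; rewrite h. Qed.

Lemma ExpectD (R : realFieldType) (L : nat) (P : {ffun outcome L -> R}) f g :
  Expect P (fun x => f x + g x) = Expect P f + Expect P g.
Proof. by rewrite /Expect -big_split; apply: eq_bigr => x _; rewrite mulrDr. Qed.

Lemma ExpectB (R : realFieldType) (L : nat) (P : {ffun outcome L -> R}) f g :
  Expect P (fun x => f x - g x) = Expect P f - Expect P g.
Proof. by rewrite /Expect -sumrB; apply: eq_bigr => x _; rewrite mulrBr. Qed.

Lemma Expect1 (R : realFieldType) (L : nat) (P : {ffun outcome L -> R}) :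
  is_pmf P -> Expect P (fun=> 1) = 1.
Proof. by case=> _ h; rewrite /Expect; under eq_bigr do rewrite mulr1. Qed.

Lemma gam_pos (R : realFieldType) (L : nat) (P : {ffun outcome L -> R}) l :
  is_pmf P -> 0 < pZ P l -> 0 < piZ P l -> 0 < SigmaZ P l l -> 0 < gam P l.
Proof.
move=> hP hp hpi hS.
have hZZ : SigmaZ P l l = pZ P l - pZ P l ^+ 2.
  rewrite mxE /Cov.
  have -> : Expect P (fun x => Zv R l x * Zv R l x) = pZ P l.
    by apply: Expect_ext => x; rewrite /Zv; case: (x.2 l); rewrite ?mulr1 ?mulr0.
  by rewrite expr2.
have hq : 0 < 1 - pZ P l.
  by rewrite -(pmulr_rgt0 _ hp) mulrBr mulr1 -expr2 -hZZ.
pose a := Expect P (fun x => Dv R x * Zv R l x).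
pose b := Expect P (fun x => Dv R x * (1 - Zv R l x)).
have hpi' : piZ P l = a / pZ P l - b / (1 - pZ P l).
  rewrite /piZ /condED.
  have -> : Expect P (fun x => Dv R x * (x.2 l == true)%:R) = a.
    by apply: Expect_ext => x; rewrite /Zv; case: (x.2 l).
  have -> : Expect P (fun x => (x.2 l == true)%:R) = pZ P l.
    by apply: Expect_ext => x; rewrite /Zv; case: (x.2 l).
  have -> : Expect P (fun x => Dv R x * (x.2 l == false)%:R) = b.
    by apply: Expect_ext => x; rewrite /Zv; case: (x.2 l) => /=; rewrite ?mulr1n ?mulr0n ?subrr ?subr0.
  have -> : Expect P (fun x => (x.2 l == false)%:R) = 1 - pZ P l.
    rewrite (@Expect_ext _ _ _ _ (fun x => 1 - Zv R l x)); last first.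
      by move=> x; rewrite /Zv; case: (x.2 l) => /=; rewrite ?mulr1n ?mulr0n ?subrr ?subr0.
    by rewrite ExpectB Expect1.
  by [].
have hgam : gam P l = a - (a + b) * pZ P l.
  rewrite /gam /Cov.
  have -> : Expect P (Dv R (L:=L)) = a + b.
    rewrite -ExpectD; apply: Expect_ext => x; ring.
  by [].
have -> : gam P l = piZ P l * (pZ P l * (1 - pZ P l)).
  rewrite hgam hpi'; field.
  by rewrite (lt0r_neq0 hp) (lt0r_neq0 hq).
by rewrite mulr_gt0 // mulr_gt0.
Qed.

Lemma quad_diag (R : realFieldType) n (d : 'rV[R]_n) (x : 'cV[R]_n) :
  (x^T *m diag_mx d *m x) 0 0 = \sum_i d 0 i * x i 0 ^+ 2.
Proof.
rewrite mxE; apply: eq_bigr => i _; rewrite mul_mx_diag !mxE; ring.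
Qed.

Lemma quad_rank1 (R : realFieldType) n (u x : 'cV[R]_n) :
  (x^T *m (u *m u^T) *m x) 0 0 = ((u^T *m x) 0 0) ^+ 2.
Proof.
rewrite !mulmxA -mulmxA mxE big_ord1 expr2; congr (_ * _).
rewrite !mxE; apply: eq_bigr => i _; by rewrite !mxE mulrC.
Qed.

Lemma posdef_dr1 (R : realFieldType) n (d : 'rV[R]_n) (u : 'cV[R]_n) :
  (forall i, 0 < d 0 i) -> posdef (diag_mx d + u *m u^T).
Proof.
move=> hd; split.
  by rewrite linearD /= tr_diag_mx trmx_mul trmxK.
move=> x hx; rewrite mulmxDr mulmxDl mxE quad_diag quad_rank1.
have hs : 0 < \sum_i d 0 i * x i 0 ^+ 2.
  rewrite lt_def sumr_ge0 ?andbT; last by move=> i _; rewrite mulr_ge0 ?sqr_ge0 ?ltW.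
  apply/eqP => h0; move/negP: hx; apply; apply/eqP/matrixP => i j.
  rewrite (ord1 j) mxE.
  have hge : forall k : 'I_n, true -> 0 <= d 0 k * x k 0 ^+ 2.
    by move=> k _; rewrite mulr_ge0 ?sqr_ge0 ?ltW.
  have := psumr_eq0P hge h0 (i := i) isT.
  by move/eqP; rewrite mulf_eq0 (negbTE (lt0r_neq0 (hd i))) /= sqrf_eq0 => /eqP.
by apply: ltr_wpDr; rewrite ?sqr_ge0.
Qed.

Lemma lambda_of (R : realFieldType) (L : nat) (P : {ffun outcome L -> R}) W (w : 'I_L -> R) :
  (forall l, gam P l != 0) -> \sum_l w l = 1 ->
  W *m gamv P = \col_l (w l / gam P l) -> forall l, lambdaW P W l = w l.
Proof.
move=> hg hs hW l; rewrite /lambdaW -mulmxA hW !mxE.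
have -> : \sum_j (gamv P)^T 0 j * (\col_l (w l / gam P l)) j 0 = 1.
  rewrite -hs; apply: eq_bigr => j _; rewrite !mxE; field; exact: hg.
by rewrite divr1; field; exact: hg.
Qed.

Lemma posdef_diag_entry (R : realFieldType) n (S : 'M[R]_n) i :
  posdef S -> 0 < S i i.
Proof.
case=> _ h; pose e : 'cV[R]_n := delta_mx i 0; have := h e.
have -> : (e^T *m S *m e) 0 0 = S i i.
  by rewrite /e trmx_delta -rowE -colE !mxE.
apply; apply/negP => /eqP/matrixP/(_ i 0); rewrite !mxE !eqxx /=.
by move/eqP; rewrite oner_eq0.
Qed.

Theorem lemma2 (R : realFieldType) (L : nat) (P : {ffun outcome L -> R}) :
  (1 < L)%N -> is_pmf P -> A3 P ->
  (forall w : 'I_L -> R, in_simplex_interior w ->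
     let W := diag_mx (\row_l (w l / gam P l ^+ 2)) in
     posdef W /\ forall l, lambdaW P W l = w l) /\
  (forall w : 'I_L -> R, in_simplex w ->
     exists W : 'M[R]_L, posdef W /\ forall l, lambdaW P W l = w l).
Proof.
move=> hL hP [hp [hpi hS]].
have hg : forall l, 0 < gam P l.
  by move=> l; apply: gam_pos => //; apply: posdef_diag_entry.
have hg0 : forall l, gam P l != 0 by move=> l; exact: lt0r_neq0.
split.
  move=> w [hw hs] W; split.
    have := @posdef_dr1 R L (\row_l (w l / gam P l ^+ 2)) 0.
    rewrite mul0mx addr0; apply => i; rewrite mxE divr_gt0 ?exprn_gt0 //.
  apply: lambda_of => //.
  apply/matrixP => i j; rewrite (ord1 j) mul_diag_mx !mxE; field; exact: hg0.
move=> w [hw hs].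
pose g2 := \sum_i gam P i ^+ 2.
have hg2 : 0 < g2.
  pose i0 := Ordinal (ltnW hL).
  rewrite /g2 (bigD1 i0) //=.
  have : 0 <= \sum_(i < L | i != i0) gam P i ^+ 2.
    by apply: sumr_ge0 => i _; apply: sqr_ge0.
  have := exprn_gt0 2 (hg i0).
  lra.
pose t := (2 * g2)^-1.
pose v : 'cV[R]_L := \col_l (w l / gam P l).
pose u := v - t *: gamv P.
pose d : 'rV[R]_L := \row_i ((w i / gam P i ^+ 2 + t) / 2).
exists (diag_mx d + u *m u^T); split.
  apply: posdef_dr1 => i; rewrite mxE divr_gt0 // ltr_wpDl ?divr_ge0 ?sqr_ge0 ?invr_gt0 ?mulr_gt0 //.
apply: lambda_of => //.
have hsu : (u^T *m gamv P) 0 0 = 2^-1.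
  rewrite mxE.
  have -> : \sum_j u^T 0 j * gamv P j 0 = \sum_j (w j - t * gam P j ^+ 2).
    by apply: eq_bigr => j _; rewrite !mxE; field; exact: hg0.
  rewrite sumrB -mulr_sumr hs -/g2 /t; field.
  by rewrite (lt0r_neq0 hg2).
apply/matrixP => i j; rewrite (ord1 j) mulmxDl mul_diag_mx -mulmxA !mxE big_ord1 hsu !mxE.
field; exact: hg0.
Qed.
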